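(* There is an absolute constant $c>0$ such that for every $n$ that is a power of $4$ there exists a $2$-wise independent family $\mathcal{H}$ of functions $h:[n]\to\{-1,1\}$ with \[\mathbb{E}_{h\in\mathcal{H}}\left[\sup_{1\le t\le n}\left|h_1+h_2+\cdots+h_t\right|\right]\ \ge\ c\,\sqrt{n}\,\lg n .\]
   Context: $[n]=\{1,\dots,n\}$, $\lg$ is the base-2 logarithm, and $h_i:=h(i)$. A $k$-wise independent family from $[n]$ to $\{-1,1\}$ is a probability distribution $\mathcal{H}$ over functions $h:[n]\to\{-1,1\}$ such that for any $k$ distinct indices $i_1,\dots,i_k$, the values $h_{i_1},\dots,h_{i_k}$ are independent uniformly random signs (Rademachers). *)

(* Defs.v *)
From Stdlib Require Import Reals Lra List.
Open Scope R_scope.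

(* A (finitely supported) probability distribution over functions
   h : nat -> bool, represented as a list of (weight, function) pairs.
   Only the values h 1, ..., h n matter; the boolean b encodes the sign
   (true |-> +1, false |-> -1). *)
Definition sign_family := list (R * (nat -> bool)).

Definition wsum (F : sign_family) (f : (nat -> bool) -> R) : R :=
  fold_right (fun p acc => fst p * f (snd p) + acc) 0 F.

Definition is_distribution (F : sign_family) : Prop :=
  Forall (fun p => 0 <= fst p) F /\ wsum F (fun _ => 1) = 1.

Definition sgn (b : bool) : R := if b then 1 else -1.

Definition two_wise_indep (n : nat) (F : sign_family) : Prop :=
  forall i j : nat, (1 <= i <= n)%nat -> (1 <= j <= n)%nat -> i <> j ->
  forall a b : bool,
    wsum F (fun h => if andb (Bool.eqb (h i) a) (Bool.eqb (h j) b) then 1 else 0)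
    = / 4.

Fixpoint psum (h : nat -> bool) (t : nat) : R :=
  match t with
  | O => 0
  | S t' => psum h t' + sgn (h t)
  end.

Fixpoint maxps (h : nat -> bool) (n : nat) : R :=
  match n with
  | O => 0
  | S n' => Rmax (maxps h n') (Rabs (psum h n))
  end.

Definition lg (x : R) : R := ln x / ln 2.

(* Main.v *)
Require Import Defs.
From Stdlib Require Import Reals.
From Stdlib Require Import Lra Lia List Arith.
Import ListNotations.
Open Scope R_scope.

Fixpoint sumR (n : nat) (f : nat -> R) : R :=
  match n with O => 0 | S n' => sumR n' f + f n' end.

Lemma sumR_ext n f g : (forall i, (i < n)%nat -> f i = g i) -> sumR n f = sumR n g.
Proof. induction n; intros H; cbn [sumR]; [reflexivity|].
  rewrite IHn by (intros; apply H; lia). rewrite H by lia. reflexivity. Qed.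

Lemma sumR_plus n f g : sumR n (fun i => f i + g i) = sumR n f + sumR n g.
Proof. induction n; cbn [sumR]; [lra|]. rewrite IHn; lra. Qed.

Lemma sumR_scal n c f : sumR n (fun i => c * f i) = c * sumR n f.
Proof. induction n; cbn [sumR]; [lra|]. rewrite IHn; lra. Qed.

Lemma sumR_const n c : sumR n (fun _ => c) = INR n * c.
Proof. induction n; cbn [sumR]; [simpl; lra|]. rewrite IHn, S_INR; lra. Qed.

Lemma sumR_split a b f : sumR (a + b) f = sumR a f + sumR b (fun i => f (a + i)%nat).
Proof. induction b; cbn [sumR]. rewrite Nat.add_0_r; lra.
  rewrite Nat.add_succ_r; cbn [sumR]. rewrite IHb; lra. Qed.

Lemma sumR_double n f : sumR (2 * n) f = sumR n (fun i => f (2*i)%nat + f (2*i+1)%nat).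
Proof. induction n. simpl; lra.
  replace (2 * S n)%nat with (S (S (2*n))) by lia. cbn [sumR]. rewrite IHn.
  replace (2*n+1)%nat with (S (2*n)) by lia. lra. Qed.

Lemma sumR_shift n f : sumR (S n) f = f O + sumR n (fun i => f (S i)).
Proof. induction n; cbn [sumR]. lra. cbn [sumR] in IHn. rewrite IHn. lra. Qed.

Lemma sumR_le n f g : (forall i, (i < n)%nat -> f i <= g i) -> sumR n f <= sumR n g.
Proof. induction n; intros H; cbn [sumR]; [lra|].
  assert (sumR n f <= sumR n g) by (apply IHn; intros; apply H; lia).
  assert (f n <= g n) by (apply H; lia). lra. Qed.

Definition lsum {A} (l : list A) (g : A -> R) : R := fold_right (fun x acc => g x + acc) 0 l.

Lemma lsum_app {A} (l1 l2 : list A) g : lsum (l1 ++ l2) g = lsum l1 g + lsum l2 g.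
Proof. induction l1; simpl; [lra|]. unfold lsum in *; simpl. rewrite IHl1; lra. Qed.

Lemma lsum_seq m g : lsum (seq 0 m) g = sumR m g.
Proof. induction m. reflexivity. rewrite seq_S, lsum_app, IHm. simpl. cbn [sumR]. unfold lsum; simpl. lra. Qed.

Lemma lsum_ext {A} (l : list A) g1 g2 : (forall x, g1 x = g2 x) -> lsum l g1 = lsum l g2.
Proof. intros H; induction l; simpl; [reflexivity|]. unfold lsum in *; simpl. rewrite IHl, H; reflexivity. Qed.

Lemma lsum_bool g : lsum [true; false] g = g true + g false.
Proof. unfold lsum; simpl; lra. Qed.

Lemma wsum_lsum F f : wsum F f = lsum F (fun p => fst p * f (snd p)).
Proof. reflexivity. Qed.

Lemma wsum_app F1 F2 f : wsum (F1 ++ F2) f = wsum F1 f + wsum F2 f.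
Proof. rewrite !wsum_lsum. apply lsum_app. Qed.

Lemma wsum_flat_map {A} (g : A -> sign_family) l f :
  wsum (flat_map g l) f = lsum l (fun x => wsum (g x) f).
Proof. induction l; simpl. reflexivity. rewrite wsum_app, IHl. reflexivity. Qed.

Lemma wsum_ext F f g : (forall h, f h = g h) -> wsum F f = wsum F g.
Proof. intros H. rewrite !wsum_lsum. apply lsum_ext. intros; rewrite H; reflexivity. Qed.

Lemma wsum_plus F f g : wsum F (fun h => f h + g h) = wsum F f + wsum F g.
Proof. induction F; simpl; [lra|]. unfold wsum in *; simpl. rewrite IHF; lra. Qed.

Lemma wsum_scal F c f : wsum F (fun h => c * f h) = c * wsum F f.
Proof. induction F; simpl; [lra|]. unfold wsum in *; simpl. rewrite IHF; lra. Qed.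

Lemma wsum_le F f g : Forall (fun p => 0 <= fst p) F -> (forall h, f h <= g h) -> wsum F f <= wsum F g.
Proof. intros HF H; induction HF; simpl; [lra|]. unfold wsum in *; simpl.
  assert (fst x * f (snd x) <= fst x * g (snd x)) by (apply Rmult_le_compat_l; auto). lra. Qed.

Definition scale (c : R) (L : sign_family) : sign_family := map (fun p => (c * fst p, snd p)) L.

Lemma wsum_scale c L f : wsum (scale c L) f = c * wsum L f.
Proof. induction L; simpl; [lra|]. unfold wsum in *; simpl. rewrite IHL; lra. Qed.

Definition upd (h : nat -> bool) (t : nat) (v : bool) : nat -> bool :=
  fun i => if Nat.eqb i t then v else h i.

Fixpoint Rlist (mu : nat -> R) (t : nat) : sign_family :=
  match t with
  | O => [(1, fun _ => true)]
  | S t' => flat_map (fun p => [(fst p * ((1 + mu t)/2), upd (snd p) t true);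
                               (fst p * ((1 - mu t)/2), upd (snd p) t false)]) (Rlist mu t')
  end.

Lemma Rlist_step mu t f : wsum (Rlist mu (S t)) f =
  wsum (Rlist mu t) (fun h => (1 + mu (S t))/2 * f (upd h (S t) true) + (1 - mu (S t))/2 * f (upd h (S t) false)).
Proof. cbn [Rlist]. rewrite wsum_flat_map, wsum_lsum. apply lsum_ext. intros [w h]. simpl.
  unfold wsum; simpl. lra. Qed.

Lemma Rlist_nonneg mu t : (forall i, Rabs (mu i) <= 1) -> Forall (fun p => 0 <= fst p) (Rlist mu t).
Proof. intros Hm. induction t; simpl. constructor; [simpl; lra| constructor].
  apply Forall_forall. intros x Hx. apply in_flat_map in Hx as [p [Hp Hx]].
  rewrite Forall_forall in IHt. specialize (IHt p Hp). specialize (Hm (S t)).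
  assert (- 1 <= mu (S t) <= 1) by (split; [assert (-mu (S t) <= Rabs (mu (S t))) by (rewrite <- Rabs_Ropp; apply Rle_abs); lra| eapply Rle_trans; [apply Rle_abs|exact Hm]]).
  simpl in Hx; destruct Hx as [<-|[<-|[]]]; simpl; apply Rmult_le_pos; lra. Qed.

Lemma Rlist_one mu t : wsum (Rlist mu t) (fun _ => 1) = 1.
Proof. induction t. unfold wsum; simpl; lra. rewrite Rlist_step.
  rewrite (wsum_ext _ _ (fun _ => 1)). exact IHt. intros; lra. Qed.

Lemma wsum_const F c : wsum F (fun _ => c) = c * wsum F (fun _ => 1).
Proof. rewrite <- wsum_scal. apply wsum_ext; intros; lra. Qed.

Lemma upd_other h t v i : i <> t -> upd h t v i = h i.
Proof. intros H; unfold upd. destruct (Nat.eqb_spec i t); congruence. Qed.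
Lemma upd_same h t v : upd h t v t = v.
Proof. unfold upd. rewrite Nat.eqb_refl; reflexivity. Qed.

Lemma Rlist_mean mu t i : (1 <= i <= t)%nat -> wsum (Rlist mu t) (fun h => sgn (h i)) = mu i.
Proof. induction t; intros Hi. lia. rewrite Rlist_step.
  destruct (Nat.eq_dec i (S t)) as [->|Hne].
  - rewrite (wsum_ext _ _ (fun _ => mu (S t))).
    rewrite wsum_const, Rlist_one; lra.
    intros h; rewrite !upd_same; simpl; lra.
  - rewrite <- IHt by lia. apply wsum_ext. intros h. rewrite !upd_other by auto. lra. Qed.

Lemma Rlist_cov mu t i j : (1 <= i <= t)%nat -> (1 <= j <= t)%nat -> i <> j ->
  wsum (Rlist mu t) (fun h => sgn (h i) * sgn (h j)) = mu i * mu j.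
Proof. induction t; intros Hi Hj Hij. lia. rewrite Rlist_step.
  destruct (Nat.eq_dec i (S t)) as [->|Hne].
  - rewrite (wsum_ext _ _ (fun h => mu (S t) * sgn (h j))).
    rewrite wsum_scal, Rlist_mean by lia. reflexivity.
    intros h; rewrite !upd_same, !upd_other by auto; simpl; lra.
  - destruct (Nat.eq_dec j (S t)) as [->|Hne2].
    + rewrite (wsum_ext _ _ (fun h => mu (S t) * sgn (h i))).
      rewrite wsum_scal, Rlist_mean by lia. lra.
      intros h; rewrite !upd_same, !upd_other by auto; simpl; lra.
    + rewrite <- IHt by lia. apply wsum_ext. intros h. rewrite !upd_other by auto. lra. Qed.

Lemma Rlist_psum mu t t0 : (t0 <= t)%nat ->
  wsum (Rlist mu t) (fun h => psum h t0) = sumR t0 (fun p => mu (S p)).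
Proof. induction t0; intros H. simpl. rewrite wsum_const, Rlist_one; lra.
  cbn [psum sumR]. rewrite wsum_plus, IHt0 by lia. rewrite Rlist_mean by lia. reflexivity. Qed.

Lemma maxps_ge h n t : (1 <= t <= n)%nat -> Rabs (psum h t) <= maxps h n.
Proof. induction n; intros Ht. lia. cbn [maxps].
  destruct (Nat.eq_dec t (S n)) as [->|Hne]. apply Rmax_r.
  eapply Rle_trans; [apply IHn; lia| apply Rmax_l]. Qed.

Lemma maxps_ge_psum h n t : (t <= n)%nat -> psum h t <= maxps h n.
Proof. intros H. destruct t. simpl.
  induction n; cbn [maxps]. lra. eapply Rle_trans; [apply IHn; lia| apply Rmax_l].
  eapply Rle_trans; [apply Rle_abs| apply maxps_ge; lia]. Qed.

Lemma maxps_ge1 h n : (1 <= n)%nat -> 1 <= maxps h n.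
Proof. intros H. eapply Rle_trans; [|apply (maxps_ge h n 1); lia].
  simpl. unfold sgn; destruct (h 1%nat); rewrite Rplus_0_l; [rewrite Rabs_R1| rewrite Rabs_left by lra]; lra. Qed.

Lemma div2_ev q : ((2*q)/2 = q)%nat.
Proof. rewrite Nat.mul_comm, Nat.div_mul; auto. Qed.
Lemma div2_od q : ((2*q+1)/2 = q)%nat.
Proof. replace (2*q+1)%nat with (1 + q*2)%nat by lia. rewrite Nat.div_add by lia. reflexivity. Qed.
Lemma odd_ev q : Nat.odd (2*q) = false.
Proof. apply Nat.odd_even. Qed.
Lemma odd_od q : Nat.odd (2*q+1) = true.
Proof. replace (2*q+1)%nat with (1 + 2*q)%nat by lia. rewrite Nat.odd_add_mul_2. reflexivity. Qed.

Fixpoint chi (k a b : nat) : R :=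
  match k with
  | O => 1
  | S k' => chi k' (a / 2) (b / 2) * (if andb (Nat.odd a) (Nat.odd b) then -1 else 1)
  end.

Lemma chi_sq k a b : chi k a b * chi k a b = 1.
Proof. revert a b; induction k; intros; cbn [chi]. lra.
  specialize (IHk (a/2)%nat (b/2)%nat). destruct (Nat.odd a && Nat.odd b)%bool;
  (eapply eq_trans; [|exact IHk]; ring). Qed.

Lemma chi_abs k a b : Rabs (chi k a b) = 1.
Proof. pose proof (chi_sq k a b). assert (chi k a b = 1 \/ chi k a b = -1) by nra.
  destruct H0 as [->| ->]; [apply Rabs_R1| rewrite Rabs_left by lra; lra]. Qed.

Lemma chi_0 k b : chi k 0 b = 1.
Proof. revert b; induction k; intros; cbn [chi]. lra. rewrite Nat.Div0.div_0_l by lia. rewrite IHk. simpl. lra. Qed.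

Definition kd (a b : nat) : R := if Nat.eqb a b then 1 else 0.

Lemma chi_orth k b b' : (b < 2^k)%nat -> (b' < 2^k)%nat ->
  sumR (2^k) (fun a => chi k a b * chi k a b') = INR (2^k) * kd b b'.
Proof. revert b b'; induction k; intros b b' Hb Hb'.
  - simpl in Hb, Hb'. unfold kd. replace b with 0%nat by lia. replace b' with 0%nat by lia.
    simpl. ring.
  - rewrite Nat.pow_succ_r' in *. rewrite sumR_double.
    assert (Hs : forall a, chi (S k) (2*a) b * chi (S k) (2*a) b' + chi (S k) (2*a+1) b * chi (S k) (2*a+1) b'
       = (chi k a (b/2) * chi k a (b'/2)) * (1 + (if Nat.odd b then -1 else 1) * (if Nat.odd b' then -1 else 1))).
    { intros a. cbn [chi]. rewrite div2_ev, div2_od, odd_ev, odd_od. simpl.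
      destruct (Nat.odd b), (Nat.odd b'); simpl; ring. }
    rewrite (sumR_ext _ _ _ (fun a _ => Hs a)).
    rewrite (sumR_ext _ _ (fun a => (1 + (if Nat.odd b then -1 else 1) * (if Nat.odd b' then -1 else 1)) * (chi k a (b/2) * chi k a (b'/2)))) by (intros; ring).
    rewrite sumR_scal.
    destruct (Nat.Even_or_Odd b) as [[q Hq]|[q Hq]]; destruct (Nat.Even_or_Odd b') as [[q' Hq']|[q' Hq']]; subst b b';
    rewrite ?div2_ev, ?div2_od, ?odd_ev, ?odd_od;
    (rewrite IHk; [|lia|lia]); rewrite mult_INR; unfold kd; simpl INR;
    repeat match goal with |- context [Nat.eqb ?x ?y] => destruct (Nat.eqb_spec x y) end; try lia; lra.
Qed.

Lemma sum_nz n g : sumR (S n) (fun a => (if Nat.eqb a 0 then 0 else 1) * g a) = sumR (S n) g - g O.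
Proof. rewrite !sumR_shift. simpl. rewrite (sumR_ext _ _ (fun i => g (S i))) by (intros; simpl; ring). ring. Qed.

Lemma pow2_pos k : (0 < 2^k)%nat.
Proof. apply Nat.neq_0_lt_0, Nat.pow_nonzero; lia. Qed.

Lemma chi_orth_nz k l l' : (l < 2^k)%nat -> (l' < 2^k)%nat ->
  sumR (2^k) (fun a => (if Nat.eqb a 0 then 0 else 1) * (chi k a l * chi k a l')) = INR (2^k) * kd l l' - 1.
Proof. intros H1 H2. pose proof (pow2_pos k). destruct (2^k)%nat eqn:E. lia.
  rewrite sum_nz. rewrite <- E. rewrite chi_orth by lia. rewrite !chi_0. ring. Qed.

Definition bs (g : bool -> R) : R := g true + g false.

Definition tb (B j : nat) : R := if Nat.ltb B (2^j) then 1 else -1.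

Definition eps (k' B : nat) (r : bool) : R :=
  match k' with
  | O => sgn r
  | S j => if Bool.eqb (Nat.ltb B (2^(S j))) (Nat.ltb (B mod 2^(S j)) (2^j)) then -1 else 1
  end.

Fixpoint Dk (k B : nat) (r : bool) (b : nat) : R :=
  match k with
  | O => 0
  | S k' => eps k' B r * tb b k'
           + (if Bool.eqb (Nat.ltb B (2^k')) (Nat.ltb b (2^k')) then 2 * Dk k' (B mod 2^k') r (b mod 2^k') else 0)
  end.

Lemma ltb_lo B h : (B < h)%nat -> Nat.ltb B h = true.
Proof. intros; apply Nat.ltb_lt; auto. Qed.
Lemma ltb_hi B h : Nat.ltb (h + B) h = false.
Proof. apply Nat.ltb_ge; lia. Qed.
Lemma mod_lo B h : (B < h)%nat -> (B mod h = B)%nat.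
Proof. apply Nat.mod_small. Qed.
Lemma mod_hi B h : (B < h)%nat -> ((h + B) mod h = B)%nat.
Proof. intros H. replace (h + B)%nat with (B + 1 * h)%nat by lia. rewrite Nat.Div0.mod_add. apply Nat.mod_small; auto. Qed.

Lemma pow2S j : (2^(S j) = 2^j + 2^j)%nat.
Proof. rewrite Nat.pow_succ_r'. lia. Qed.

Lemma sum_split2 k g : sumR (2^(S k)) g = sumR (2^k) (fun B => g B + g (2^k + B)%nat).
Proof. rewrite pow2S, sumR_split, sumR_plus. reflexivity. Qed.

Lemma tb_lo B j : (B < 2^j)%nat -> tb B j = 1.
Proof. intros H; unfold tb; rewrite ltb_lo; auto. Qed.
Lemma tb_hi B j : tb (2^j + B) j = -1.
Proof. unfold tb; rewrite ltb_hi; auto. Qed.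
Lemma tb_sq B j : tb B j * tb B j = 1.
Proof. unfold tb; destruct (Nat.ltb B (2^j)); ring. Qed.

Lemma eps_lo j B r : (B < 2^(S j))%nat -> eps (S j) B r = - tb B j.
Proof. intros H. unfold eps. rewrite ltb_lo by auto. rewrite mod_lo by auto. unfold tb.
  destruct (Nat.ltb B (2^j)); simpl; ring. Qed.
Lemma eps_hi j B r : (B < 2^(S j))%nat -> eps (S j) (2^(S j) + B) r = tb B j.
Proof. intros H. unfold eps. rewrite ltb_hi. rewrite mod_hi by auto. unfold tb.
  destruct (Nat.ltb B (2^j)); simpl; ring. Qed.
Lemma eps_sq k B r : eps k B r * eps k B r = 1.
Proof. destruct k; simpl. unfold sgn; destruct r; ring.
  destruct (Bool.eqb _ _); ring. Qed.
Lemma eps_abs k B r : Rabs (eps k B r) = 1.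
Proof. destruct k; simpl. unfold sgn; destruct r; [apply Rabs_R1| rewrite Rabs_left by lra; lra].
  destruct (Bool.eqb _ _); [rewrite Rabs_left by lra; lra|apply Rabs_R1]. Qed.
Lemma tb_abs B j : Rabs (tb B j) = 1.
Proof. unfold tb; destruct (Nat.ltb _ _); [apply Rabs_R1| rewrite Rabs_left by lra; lra]. Qed.

Lemma Dk_lo k' B r b : (B < 2^k')%nat -> Dk (S k') B r b =
  eps k' B r * tb b k' + (if Nat.ltb b (2^k') then 2 * Dk k' B r (b mod 2^k') else 0).
Proof. intros H. cbn [Dk]. rewrite ltb_lo by auto. rewrite mod_lo by auto. destruct (Nat.ltb b _); reflexivity. Qed.
Lemma Dk_hi k' B r b : (B < 2^k')%nat -> Dk (S k') (2^k' + B) r b =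
  eps k' (2^k' + B) r * tb b k' + (if Nat.ltb b (2^k') then 0 else 2 * Dk k' B r (b mod 2^k')).
Proof. intros H. cbn [Dk]. rewrite ltb_hi. rewrite mod_hi by auto. destruct (Nat.ltb b _); reflexivity. Qed.

Lemma Dk0 B r b : Dk 0 B r b = 0.
Proof. reflexivity. Qed.

Lemma sumR_zero n f : (forall i, (i < n)%nat -> f i = 0) -> sumR n f = 0.
Proof. intros H. rewrite (sumR_ext _ _ (fun _ => 0)) by auto. rewrite sumR_const; ring. Qed.

Lemma Dk_mean k b : sumR (2^k) (fun B => bs (fun r => Dk k B r b)) = 0.
Proof. revert b; induction k as [|k' IH]; intros b.
  - apply sumR_zero; intros; unfold bs; simpl; ring.
  - rewrite sum_split2.
    rewrite (sumR_ext _ _ (fun B => 2 * bs (fun r => Dk k' B r (b mod 2^k')))).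
    + rewrite sumR_scal, IH. ring.
    + intros B HB. unfold bs. rewrite !Dk_lo, !Dk_hi by auto. destruct k' as [|j].
      * simpl eps. unfold sgn. destruct (Nat.ltb b _); ring.
      * rewrite !eps_lo, !eps_hi by auto. destruct (Nat.ltb b _); ring.
Qed.

Lemma tb_sum i : sumR (2^(S i)) (fun B => tb B i) = 0.
Proof. rewrite sum_split2. apply sumR_zero. intros B HB. rewrite tb_lo, tb_hi by auto. ring. Qed.

Lemma tbD_sum j c : sumR (2^(S j)) (fun B => bs (fun r => tb B j * Dk (S j) B r c)) = 0.
Proof. rewrite sum_split2. destruct j as [|i].
  - apply sumR_zero. intros B HB. unfold bs. rewrite !tb_lo, !tb_hi by auto.
    rewrite !Dk_lo, !Dk_hi by auto. rewrite !Dk0. simpl eps. unfold sgn.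
    destruct (Nat.ltb c _); ring.
  - rewrite (sumR_ext _ _ (fun B => (-4 * tb c (S i)) * tb B i + (if Nat.ltb c (2^(S i)) then 2 else -2) * bs (fun r => Dk (S i) B r (c mod 2^(S i))))).
    + rewrite sumR_plus, !sumR_scal, tb_sum, Dk_mean. ring.
    + intros B HB. unfold bs. rewrite !tb_lo, !tb_hi by auto.
      rewrite !(Dk_lo (S i) B), !(Dk_hi (S i) B) by auto. rewrite !eps_lo, !eps_hi by auto.
      destruct (Nat.ltb c _); ring.
Qed.

Lemma tb_cases B j : tb B j = 1 \/ tb B j = -1.
Proof. unfold tb; destruct (Nat.ltb _ _); auto. Qed.
Lemma tb_ge B j : (2^j <= B)%nat -> tb B j = -1.
Proof. intros H; unfold tb. replace (Nat.ltb B (2^j)) with false; auto. symmetry; apply Nat.ltb_ge; auto. Qed.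
Lemma mod_ge b h : (h <= b < h + h)%nat -> (b = h + b mod h)%nat /\ (b mod h < h)%nat.
Proof. intros H. pose proof (mod_hi (b - h) h). replace (h + (b - h))%nat with b in H0 by lia.
  rewrite H0 by lia. lia. Qed.

Lemma Dk_cov k b b' : (b < 2^k)%nat -> (b' < 2^k)%nat ->
  sumR (2^k) (fun B => bs (fun r => Dk k B r b * Dk k B r b')) = 2 * INR (2^k) * (INR (2^k) * kd b b' - 1).
Proof. revert b b'; induction k as [|k' IH]; intros b b' Hb Hb'.
  - simpl in Hb, Hb'. replace b with 0%nat by lia. replace b' with 0%nat by lia.
    unfold kd; simpl. unfold bs; simpl. ring.
  - rewrite sum_split2. destruct k' as [|j].
    + simpl in Hb, Hb'.
      assert (b = 0 \/ b = 1)%nat as [->| ->] by lia; assert (b' = 0 \/ b' = 1)%nat as [->| ->] by lia;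
      unfold kd, bs, tb, sgn; simpl; unfold tb; simpl; ring.
    + assert (Hh : (2^(S (S j)) = 2^(S j) + 2^(S j))%nat) by apply pow2S.
      rewrite Hh in Hb, Hb'.
      assert (HI : INR (2^(S (S j))) = 2 * INR (2^(S j))) by (rewrite Hh, plus_INR; ring).
      rewrite HI.
      destruct (Nat.lt_ge_cases b (2^(S j))) as [Eb|Eb]; destruct (Nat.lt_ge_cases b' (2^(S j))) as [Eb'|Eb'].
      * rewrite (sumR_ext _ _ (fun B => 4 + (-2) * bs (fun r => tb B j * Dk (S j) B r b) + (-2) * bs (fun r => tb B j * Dk (S j) B r b')
              + 4 * bs (fun r => Dk (S j) B r b * Dk (S j) B r b'))).
        { rewrite !sumR_plus, !sumR_scal, sumR_const. rewrite !tbD_sum. rewrite IH by auto. ring. }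
        intros B HB. unfold bs. rewrite !(Dk_lo (S j) B), !(Dk_hi (S j) B) by auto.
        rewrite (ltb_lo b), (ltb_lo b') by auto. rewrite !(mod_lo b), !(mod_lo b') by auto.
        rewrite !eps_lo, !eps_hi by auto. rewrite (tb_lo b), (tb_lo b') by auto.
        destruct (tb_cases B j) as [-> | ->]; ring.
      * assert (Hm' := mod_ge b' (2^(S j)) (conj Eb' Hb')).
        rewrite (sumR_ext _ _ (fun B => -4 + 2 * bs (fun r => tb B j * Dk (S j) B r b) + 2 * bs (fun r => tb B j * Dk (S j) B r (b' mod 2^(S j))))).
        { rewrite !sumR_plus, !sumR_scal, sumR_const. rewrite !tbD_sum.
          unfold kd. destruct (Nat.eqb_spec b b'); [lia|]. ring. }
        intros B HB. unfold bs. rewrite !(Dk_lo (S j) B), !(Dk_hi (S j) B) by auto.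
        rewrite (ltb_lo b) by auto. replace (Nat.ltb b' (2^(S j))) with false by (symmetry; apply Nat.ltb_ge; auto).
        rewrite !(mod_lo b) by auto.
        rewrite !eps_lo, !eps_hi by auto. rewrite (tb_lo b), (tb_ge b') by auto.
        destruct (tb_cases B j) as [-> | ->]; ring.
      * assert (Hm := mod_ge b (2^(S j)) (conj Eb Hb)).
        rewrite (sumR_ext _ _ (fun B => -4 + 2 * bs (fun r => tb B j * Dk (S j) B r (b mod 2^(S j))) + 2 * bs (fun r => tb B j * Dk (S j) B r b'))).
        { rewrite !sumR_plus, !sumR_scal, sumR_const. rewrite !tbD_sum.
          unfold kd. destruct (Nat.eqb_spec b b'); [lia|]. ring. }
        intros B HB. unfold bs. rewrite !(Dk_lo (S j) B), !(Dk_hi (S j) B) by auto.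
        rewrite (ltb_lo b') by auto. replace (Nat.ltb b (2^(S j))) with false by (symmetry; apply Nat.ltb_ge; auto).
        rewrite !(mod_lo b') by auto.
        rewrite !eps_lo, !eps_hi by auto. rewrite (tb_lo b'), (tb_ge b) by auto.
        destruct (tb_cases B j) as [-> | ->]; ring.
      * assert (Hm := mod_ge b (2^(S j)) (conj Eb Hb)).
        assert (Hm' := mod_ge b' (2^(S j)) (conj Eb' Hb')).
        rewrite (sumR_ext _ _ (fun B => 4 + (-2) * bs (fun r => tb B j * Dk (S j) B r (b mod 2^(S j))) + (-2) * bs (fun r => tb B j * Dk (S j) B r (b' mod 2^(S j)))
              + 4 * bs (fun r => Dk (S j) B r (b mod 2^(S j)) * Dk (S j) B r (b' mod 2^(S j))))).
        { rewrite !sumR_plus, !sumR_scal, sumR_const. rewrite !tbD_sum. rewrite IH by tauto.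
          replace (kd (b mod 2^(S j)) (b' mod 2^(S j))) with (kd b b').
          ring. unfold kd. destruct (Nat.eqb_spec b b'), (Nat.eqb_spec (b mod 2^(S j)) (b' mod 2^(S j))); auto; lia. }
        intros B HB. unfold bs. rewrite !(Dk_lo (S j) B), !(Dk_hi (S j) B) by auto.
        replace (Nat.ltb b (2^(S j))) with false by (symmetry; apply Nat.ltb_ge; auto).
        replace (Nat.ltb b' (2^(S j))) with false by (symmetry; apply Nat.ltb_ge; auto).
        rewrite !eps_lo, !eps_hi by auto. rewrite (tb_ge b), (tb_ge b') by auto.
        destruct (tb_cases B j) as [-> | ->]; ring.
Qed.

Definition Pk (k B : nat) (r : bool) : R := sumR B (Dk k B r).

Lemma Pk_lo k' B r : (B < 2^k')%nat -> Pk (S k') B r = eps k' B r * INR B + 2 * Pk k' B r.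
Proof. intros H. unfold Pk. rewrite (sumR_ext _ _ (fun b => eps k' B r * 1 + 2 * Dk k' B r b)).
  - rewrite sumR_plus, sumR_const, sumR_scal. ring.
  - intros b Hb. rewrite Dk_lo by auto. rewrite tb_lo by lia. rewrite ltb_lo by lia. rewrite mod_lo by lia. ring.
Qed.

Lemma Pk_hi k' B r : (B < 2^k')%nat ->
  Pk (S k') (2^k' + B) r = eps k' (2^k' + B) r * (INR (2^k') - INR B) + 2 * Pk k' B r.
Proof. intros H. unfold Pk. rewrite sumR_split.
  rewrite (sumR_ext (2^k') _ (fun b => eps k' (2^k' + B) r * 1)).
  rewrite (sumR_ext B _ (fun i => eps k' (2^k' + B) r * (-1) + 2 * Dk k' B r i)).
  - rewrite sumR_plus, !sumR_const, sumR_scal. ring.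
  - intros i Hi. rewrite Dk_hi by auto. rewrite tb_hi, ltb_hi, mod_hi by lia. ring.
  - intros b Hb. rewrite Dk_hi by auto. rewrite tb_lo by lia. rewrite ltb_lo by lia. ring.
Qed.

Lemma INR_pow2S j : INR (2^(S j)) = 2 * INR (2^j).
Proof. rewrite pow2S, plus_INR; ring. Qed.

Lemma tent_sum j : sumR (2^(S j)) (fun B => 2 * tb B j * (INR (2^(S j)) - 2 * INR B)) = INR (2^(S j)) * INR (2^(S j)).
Proof. rewrite sum_split2. rewrite (sumR_ext _ _ (fun _ => 2 * INR (2^(S j)))).
  - rewrite sumR_const. rewrite INR_pow2S. ring.
  - intros B HB. rewrite tb_lo, tb_hi by auto. rewrite plus_INR, INR_pow2S. ring.
Qed.

Lemma Pk_sum k' : sumR (2^(S k')) (fun B => bs (fun r => Pk (S k') B r)) = INR (2^(S k')) * INR (2^(S k')) * INR k' / 4.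
Proof. induction k' as [|j IH].
  - rewrite sum_split2. simpl Nat.pow. cbn [sumR]. unfold bs.
    rewrite !(Pk_lo 0 0), !(Pk_hi 0 0) by (simpl; lia). unfold Pk. cbn [sumR]. simpl. unfold sgn. lra.
  - rewrite sum_split2.
    rewrite (sumR_ext _ _ (fun B => 2 * tb B j * (INR (2^(S j)) - 2 * INR B) + 4 * bs (fun r => Pk (S j) B r))).
    + rewrite sumR_plus, tent_sum, sumR_scal, IH. rewrite (INR_pow2S (S j)), S_INR. field.
    + intros B HB. unfold bs. rewrite !(Pk_lo (S j) B), !(Pk_hi (S j) B) by auto.
      rewrite !eps_lo, !eps_hi by auto. ring.
Qed.

Lemma INR_pow2_ge1 k : 1 <= INR (2^k).
Proof. pose proof (pow2_pos k). apply (le_INR 1). lia. Qed.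

Lemma Dk_bound k B r b : Rabs (Dk k B r b) <= INR (2^k) - 1.
Proof. revert B b; induction k as [|k' IH]; intros B b.
  - simpl. rewrite Rabs_R0. lra.
  - cbn [Dk]. rewrite INR_pow2S. pose proof (INR_pow2_ge1 k').
    eapply Rle_trans; [apply Rabs_triang|]. rewrite Rabs_mult, eps_abs, tb_abs.
    destruct (Bool.eqb _ _).
    + rewrite Rabs_mult, Rabs_right by lra. specialize (IH (B mod 2^k')%nat (b mod 2^k')%nat). lra.
    + rewrite Rabs_R0. lra.
Qed.

Lemma bs_ext f g : (forall x, f x = g x) -> bs f = bs g.
Proof. intros H; unfold bs; rewrite !H; reflexivity. Qed.
Lemma bs_plus f g : bs (fun x => f x + g x) = bs f + bs g.
Proof. unfold bs; ring. Qed.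
Lemma bs_scal c f : bs (fun x => c * f x) = c * bs f.
Proof. unfold bs; ring. Qed.
Lemma bs_le f g : (forall x, f x <= g x) -> bs f <= bs g.
Proof. intros H; unfold bs; specialize (H true) as H1; specialize (H false); lra. Qed.

Definition EO (k : nat) (G : nat -> bool -> bool -> nat -> nat -> bool -> R) : R :=
  sumR (2^k) (fun B => bs (fun s0 => bs (fun r => sumR (2^k) (fun Rc => sumR (2^k) (fun A => bs (fun rho => G B s0 r Rc A rho)))))).

Lemma EO_ext k G1 G2 : (forall B s0 r Rc A rho, (B < 2^k)%nat -> (Rc < 2^k)%nat -> (A < 2^k)%nat ->
   G1 B s0 r Rc A rho = G2 B s0 r Rc A rho) -> EO k G1 = EO k G2.
Proof. intros H. unfold EO. apply sumR_ext; intros B HB. apply bs_ext; intros s0. apply bs_ext; intros r.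
  apply sumR_ext; intros Rc HR; apply sumR_ext; intros A HA; apply bs_ext; intros rho. apply H; auto. Qed.

Lemma EO_plus k G1 G2 : EO k (fun B s0 r Rc A rho => G1 B s0 r Rc A rho + G2 B s0 r Rc A rho) = EO k G1 + EO k G2.
Proof. unfold EO. rewrite <- sumR_plus. apply sumR_ext; intros B _. rewrite <- bs_plus. apply bs_ext; intros s0.
  rewrite <- bs_plus. apply bs_ext; intros r. rewrite <- sumR_plus. apply sumR_ext; intros Rc _.
  rewrite <- sumR_plus. apply sumR_ext; intros A _. rewrite <- bs_plus. reflexivity. Qed.

Lemma EO_scal k c G : EO k (fun B s0 r Rc A rho => c * G B s0 r Rc A rho) = c * EO k G.
Proof. unfold EO. rewrite <- sumR_scal. apply sumR_ext; intros B _. rewrite <- bs_scal. apply bs_ext; intros s0.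
  rewrite <- bs_scal. apply bs_ext; intros r. rewrite <- sumR_scal. apply sumR_ext; intros Rc _.
  rewrite <- sumR_scal. apply sumR_ext; intros A _. rewrite <- bs_scal. reflexivity. Qed.

Lemma EO_le k G1 G2 : (forall B s0 r Rc A rho, (B < 2^k)%nat -> (Rc < 2^k)%nat -> (A < 2^k)%nat ->
   G1 B s0 r Rc A rho <= G2 B s0 r Rc A rho) -> EO k G1 <= EO k G2.
Proof. intros H. unfold EO. apply sumR_le; intros B HB. apply bs_le; intros s0. apply bs_le; intros r.
  apply sumR_le; intros Rc HR; apply sumR_le; intros A HA; apply bs_le; intros rho. apply H; auto. Qed.

Lemma EO_reduce k G H : (forall B s0 r, (B < 2^k)%nat ->
   sumR (2^k) (fun Rc => sumR (2^k) (fun A => bs (fun rho => G B s0 r Rc A rho))) = H B s0 r) ->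
   EO k G = sumR (2^k) (fun B => bs (fun s0 => bs (fun r => H B s0 r))).
Proof. intros HH. unfold EO. apply sumR_ext; intros B HB. apply bs_ext; intros s0. apply bs_ext; intros r.
  apply HH; auto. Qed.

Definition ind0 (A : nat) : R := if Nat.eqb A 0 then 0 else 1.

Definition cc (k B : nat) (s0 r : bool) (b : nat) : R := (sgn s0 + Dk k B r b) / INR (2^k).
Definition XX (k Rc A b l : nat) : R := chi k Rc b * chi k A l * ind0 A.

Definition mu (k B : nat) (s0 r : bool) (Rc A : nat) (rho : bool) (y : nat) : R :=
  / 2 * (cc k B s0 r ((y - 1) / 2^k)%nat + sgn rho * XX k Rc A ((y - 1) / 2^k)%nat ((y - 1) mod 2^k)%nat).

Lemma mu_bound k B s0 r Rc A rho y : Rabs (mu k B s0 r Rc A rho y) <= 1.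
Proof. unfold mu. set (b := ((y - 1) / 2^k)%nat). set (l := ((y - 1) mod 2^k)%nat).
  assert (H1 : Rabs (cc k B s0 r b) <= 1).
  { unfold cc. pose proof (INR_pow2_ge1 k). unfold Rdiv. rewrite Rabs_mult, Rabs_inv, (Rabs_right (INR _)) by lra.
    apply (Rmult_le_reg_r (INR (2^k))); [lra|]. rewrite Rmult_assoc, Rinv_l, Rmult_1_r by lra.
    eapply Rle_trans; [apply Rabs_triang|]. pose proof (Dk_bound k B r b).
    assert (Rabs (sgn s0) = 1) by (unfold sgn; destruct s0; [apply Rabs_R1| rewrite Rabs_left by lra; lra]). lra. }
  assert (H2 : Rabs (sgn rho * XX k Rc A b l) <= 1).
  { unfold XX, ind0. rewrite !Rabs_mult, !chi_abs.
    assert (Rabs (sgn rho) = 1) by (unfold sgn; destruct rho; [apply Rabs_R1| rewrite Rabs_left by lra; lra]).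
    destruct (Nat.eqb A 0); [rewrite Rabs_R0| rewrite Rabs_R1]; nra. }
  rewrite Rabs_mult, Rabs_right by lra. eapply Rle_trans.
  apply Rmult_le_compat_l; [lra| apply Rabs_triang]. lra. Qed.

Definition fam0 (k : nat) : sign_family :=
  flat_map (fun B => flat_map (fun s0 => flat_map (fun r => flat_map (fun Rc => flat_map (fun A =>
    flat_map (fun rho => Rlist (mu k B s0 r Rc A rho) (4^k)) [true; false]) (seq 0 (2^k))) (seq 0 (2^k)))
    [true; false]) [true; false]) (seq 0 (2^k)).

Lemma fam0_wsum k f : wsum (fam0 k) f = EO k (fun B s0 r Rc A rho => wsum (Rlist (mu k B s0 r Rc A rho) (4^k)) f).
Proof. unfold fam0, EO, bs. rewrite wsum_flat_map, lsum_seq. apply sumR_ext; intros B _.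
  rewrite wsum_flat_map, lsum_bool. cbv beta.
  f_equal; rewrite wsum_flat_map, lsum_bool; cbv beta; f_equal; rewrite wsum_flat_map, lsum_seq; apply sumR_ext; intros Rc _;
  rewrite wsum_flat_map, lsum_seq; apply sumR_ext; intros A _; rewrite wsum_flat_map, lsum_bool; reflexivity. Qed.

Lemma fam0_nonneg k : Forall (fun p => 0 <= fst p) (fam0 k).
Proof. apply Forall_forall. intros p Hp. unfold fam0 in Hp.
  repeat (apply in_flat_map in Hp; destruct Hp as [? [_ Hp]]).
  pose proof (Rlist_nonneg (mu k x x0 x1 x2 x3 x4) (4^k) (mu_bound k x x0 x1 x2 x3 x4)) as HF.
  rewrite Forall_forall in HF. apply HF; exact Hp. Qed.

Lemma INR_m_pos k : 0 < INR (2^k).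
Proof. pose proof (INR_pow2_ge1 k); lra. Qed.

Lemma EO_one k : EO k (fun _ _ _ _ _ _ => 1) = 8 * INR (2^k) * INR (2^k) * INR (2^k).
Proof. rewrite (EO_reduce k _ (fun _ _ _ => 2 * INR (2^k) * INR (2^k))).
  - rewrite (sumR_ext _ _ (fun _ => 8 * INR (2^k) * INR (2^k))) by (intros; unfold bs; ring).
    rewrite sumR_const. ring.
  - intros. rewrite (sumR_ext _ _ (fun _ => 2 * INR (2^k))).
    rewrite sumR_const; ring. intros. rewrite (sumR_ext _ _ (fun _ => 2)) by (intros; unfold bs; ring).
    rewrite sumR_const; ring.
Qed.

Lemma EO_mean k y : EO k (fun B s0 r Rc A rho => mu k B s0 r Rc A rho y) = 0.
Proof. set (b := ((y - 1) / 2^k)%nat).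
  rewrite (EO_reduce k _ (fun B s0 r => INR (2^k) * INR (2^k) * cc k B s0 r b)).
  - pose proof (INR_m_pos k).
    rewrite (sumR_ext _ _ (fun B => (2 * INR (2^k)) * bs (fun r => Dk k B r b))).
    + rewrite sumR_scal, Dk_mean. ring.
    + intros B _. unfold bs, cc, sgn. field. lra.
  - intros B s0 r _. rewrite (sumR_ext _ _ (fun _ => INR (2^k) * cc k B s0 r b)).
    rewrite sumR_const; ring. intros Rc _.
    rewrite (sumR_ext _ _ (fun _ => cc k B s0 r b)). rewrite sumR_const; ring.
    intros A _. unfold bs, mu, sgn. fold b. lra.
Qed.

Lemma pow4 k : (4^k = 2^k * 2^k)%nat.
Proof. rewrite <- Nat.pow_mul_l. reflexivity. Qed.

Lemma ind0_sq A : ind0 A * ind0 A = ind0 A.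
Proof. unfold ind0; destruct (Nat.eqb A 0); ring. Qed.

Lemma EO_cov k x y : (1 <= x <= 4^k)%nat -> (1 <= y <= 4^k)%nat -> x <> y ->
  EO k (fun B s0 r Rc A rho => mu k B s0 r Rc A rho x * mu k B s0 r Rc A rho y) = 0.
Proof. intros Hx Hy Hxy. pose proof (INR_m_pos k) as Hm. pose proof (pow2_pos k) as Hm'.
  rewrite pow4 in Hx, Hy.
  set (bx := ((x - 1) / 2^k)%nat). set (lx := ((x - 1) mod 2^k)%nat).
  set (by_ := ((y - 1) / 2^k)%nat). set (ly := ((y - 1) mod 2^k)%nat).
  assert (Ex : (x - 1 = 2^k * bx + lx)%nat) by (unfold bx, lx; apply Nat.div_mod_eq).
  assert (Ey : (y - 1 = 2^k * by_ + ly)%nat) by (unfold by_, ly; apply Nat.div_mod_eq).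
  assert (Hbx : (bx < 2^k)%nat) by (apply Nat.Div0.div_lt_upper_bound; lia).
  assert (Hby : (by_ < 2^k)%nat) by (apply Nat.Div0.div_lt_upper_bound; lia).
  assert (Hlx : (lx < 2^k)%nat) by (apply Nat.mod_upper_bound; lia).
  assert (Hly : (ly < 2^k)%nat) by (apply Nat.mod_upper_bound; lia).
  assert (Hk : kd bx by_ * kd lx ly = 0).
  { unfold kd. destruct (Nat.eqb_spec bx by_), (Nat.eqb_spec lx ly); try ring.
    exfalso. apply Hxy. rewrite e, e0 in Ex. lia. }
  set (M := INR (2^k)) in *.
  rewrite (EO_reduce k _ (fun B s0 r => / 2 * (M * M * cc k B s0 r bx * cc k B s0 r by_ + M * kd bx by_ * (M * kd lx ly - 1)))).
  - rewrite (sumR_ext _ _ (fun B => (2 + 2 * (M * kd bx by_ * (M * kd lx ly - 1))) + bs (fun r => Dk k B r bx * Dk k B r by_))).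
    + rewrite sumR_plus, sumR_const. rewrite Dk_cov by auto. fold M.
      transitivity (2 * M * M * M * (kd bx by_ * kd lx ly)). ring. rewrite Hk; ring.
    + intros B _. unfold bs, cc, sgn. fold M. field. lra.
  - intros B s0 r _.
    rewrite (sumR_ext _ _ (fun Rc => / 2 * (M * cc k B s0 r bx * cc k B s0 r by_) + (/2 * (M * kd lx ly - 1)) * (chi k Rc bx * chi k Rc by_))).
    + rewrite sumR_plus, sumR_const, sumR_scal. rewrite chi_orth by auto. fold M. field.
    + intros Rc _.
      rewrite (sumR_ext _ _ (fun A => / 2 * (cc k B s0 r bx * cc k B s0 r by_) + (/2 * (chi k Rc bx * chi k Rc by_)) * ((if Nat.eqb A 0 then 0 else 1) * (chi k A lx * chi k A ly)))).
      * rewrite sumR_plus, sumR_const, sumR_scal. rewrite chi_orth_nz by auto. fold M. field.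
      * intros A _. unfold bs, mu, XX, sgn. fold bx lx by_ ly.
        pose proof (ind0_sq A). unfold ind0 in *. destruct (Nat.eqb A 0); field.
Qed.

Lemma block_sum m B g : (m <> 0)%nat -> sumR (B * m) (fun p => g (p / m)%nat) = INR m * sumR B g.
Proof. intros Hm. induction B. simpl. ring.
  rewrite Nat.mul_succ_l, sumR_split, IHB.
  rewrite (sumR_ext m _ (fun _ => g B)). rewrite sumR_const. cbn [sumR]. ring.
  intros i Hi. rewrite Nat.div_add_l by auto. rewrite Nat.div_small by auto. f_equal; lia. Qed.

Lemma EO_psum k' : let k := S k' in
  EO k (fun B s0 r Rc A rho => sumR (B * 2^k) (fun p => mu k B s0 r Rc A rho (S p)))
  = 2 * INR (2^k) * INR (2^k) * (INR (2^k) * INR (2^k) * INR k' / 4).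
Proof. cbv zeta. set (k := S k'). pose proof (INR_m_pos k) as Hm. pose proof (pow2_pos k) as Hm'.
  rewrite (EO_reduce k _ (fun B s0 r => INR (2^k) * INR (2^k) * (INR B * sgn s0 + Pk k B r))).
  - rewrite (sumR_ext _ _ (fun B => (2 * INR (2^k) * INR (2^k)) * bs (fun r => Pk (S k') B r))).
    + rewrite sumR_scal. unfold k. rewrite Pk_sum. ring.
    + intros B _. unfold bs, sgn. unfold k. ring.
  - intros B s0 r _.
    rewrite (sumR_ext _ _ (fun _ => INR (2^k) * (INR B * sgn s0 + Pk k B r))).
    rewrite sumR_const; ring. intros Rc _.
    rewrite (sumR_ext _ _ (fun _ => INR B * sgn s0 + Pk k B r)). rewrite sumR_const; ring.
    intros A _. unfold bs. rewrite <- sumR_plus.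
    rewrite (sumR_ext _ _ (fun p => cc k B s0 r (p / 2^k)%nat)).
    + unfold cc. rewrite (block_sum (2^k) B (fun b => (sgn s0 + Dk k B r b) / INR (2^k))) by lia.
      rewrite (sumR_ext _ _ (fun b => / INR (2^k) * (sgn s0 + Dk k B r b))) by (intros; unfold Rdiv; ring).
      rewrite sumR_scal, sumR_plus, sumR_const. unfold Pk. field. lra.
    + intros p _. unfold mu, sgn. replace (S p - 1)%nat with p by lia. lra.
Qed.

Lemma ind_expand (h : nat -> bool) i j a b :
  (if andb (Bool.eqb (h i) a) (Bool.eqb (h j) b) then 1 else 0) =
  / 4 * 1 + (/ 4 * sgn a) * sgn (h i) + (/ 4 * sgn b) * sgn (h j) + (/ 4 * (sgn a * sgn b)) * (sgn (h i) * sgn (h j)).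
Proof. unfold sgn. destruct (h i), (h j), a, b; simpl; lra. Qed.

Lemma scale_nonneg c L : 0 <= c -> Forall (fun p => 0 <= fst p) L -> Forall (fun p => 0 <= fst p) (scale c L).
Proof. intros Hc HL. apply Forall_forall. intros p Hp. unfold scale in Hp. apply in_map_iff in Hp as [q [<- Hq]].
  rewrite Forall_forall in HL. simpl. apply Rmult_le_pos; auto. Qed.

Lemma lg_4pow k : lg (INR (4^k)) = 2 * INR k.
Proof. unfold lg. rewrite pow4, mult_INR, pow_INR. replace (INR 2) with 2 by (simpl; lra).
  rewrite ln_mult by (apply pow_lt; lra). rewrite ln_pow by lra.
  assert (0 < ln 2) by (rewrite <- ln_1; apply ln_increasing; lra). field. lra. Qed.

Lemma sqrt_4pow k : sqrt (INR (4^k)) = INR (2^k).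
Proof. rewrite pow4, mult_INR. apply sqrt_square. pose proof (INR_m_pos k); lra. Qed.

Theorem theorem1 :
  exists c : R, 0 < c /\
    forall k : nat, let n := (4 ^ k)%nat in
      exists F : sign_family,
        is_distribution F /\ two_wise_indep n F /\
        wsum F (fun h => maxps h n) >= c * sqrt (INR n) * lg (INR n).
Proof.
  exists (/ 128). split; [lra|]. intros k n.
  pose proof (INR_m_pos k) as Hm.
  set (N := 8 * INR (2^k) * INR (2^k) * INR (2^k)).
  assert (HN : 0 < N) by (unfold N; repeat apply Rmult_lt_0_compat; lra).
  exists (scale (/ N) (fam0 k)).
  assert (Hw : forall f, wsum (scale (/ N) (fam0 k)) f =
     / N * EO k (fun B s0 r Rc A rho => wsum (Rlist (mu k B s0 r Rc A rho) n) f)).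
  { intros f. rewrite wsum_scale, fam0_wsum. reflexivity. }
  assert (Hn1 : (1 <= n)%nat) by (unfold n; rewrite pow4; pose proof (pow2_pos k); nia).
  split; [split|split].
  - apply scale_nonneg. left; apply Rinv_0_lt_compat; auto. apply fam0_nonneg.
  - rewrite Hw. rewrite (EO_ext _ _ (fun _ _ _ _ _ _ => 1)). rewrite EO_one. fold N. field. lra.
    intros. apply Rlist_one.
  - intros i j Hi Hj Hij a b. rewrite Hw.
    rewrite (EO_ext _ _ (fun B s0 r Rc A rho => / 4 * 1 + (/ 4 * sgn a) * mu k B s0 r Rc A rho i
       + (/ 4 * sgn b) * mu k B s0 r Rc A rho j + (/ 4 * (sgn a * sgn b)) * (mu k B s0 r Rc A rho i * mu k B s0 r Rc A rho j))).
    + rewrite !EO_plus, !EO_scal, EO_one, !EO_mean, EO_cov by (unfold n in *; auto). fold N. field. lra.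
    + intros. rewrite (wsum_ext _ _ _ (fun h => ind_expand h i j a b)).
      rewrite !wsum_plus, !wsum_scal, Rlist_one, !Rlist_mean, Rlist_cov by auto. reflexivity.
  - assert (H1 : wsum (scale (/ N) (fam0 k)) (fun h => maxps h n) >= 1).
    { rewrite Hw. apply Rle_ge. apply (Rle_trans _ (/ N * EO k (fun _ _ _ _ _ _ => 1))).
      rewrite EO_one; fold N; right; field; lra.
      apply Rmult_le_compat_l. left; apply Rinv_0_lt_compat; auto.
      apply EO_le. intros. rewrite <- (Rlist_one (mu k B s0 r Rc A rho) n).
      apply wsum_le. apply Rlist_nonneg; intros; apply mu_bound. intros h; apply maxps_ge1; auto. }
    unfold n. rewrite sqrt_4pow, lg_4pow. fold n.
    destruct k as [|k'].
    + simpl INR. lra.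
    + assert (H2 : wsum (scale (/ N) (fam0 (S k'))) (fun h => maxps h n) >= INR (2^(S k')) * INR k' / 16).
      { rewrite Hw. apply Rle_ge.
        apply (Rle_trans _ (/ N * EO (S k') (fun B s0 r Rc A rho => sumR (B * 2^(S k')) (fun p => mu (S k') B s0 r Rc A rho (S p))))).
        - rewrite EO_psum. unfold N. right. field. lra.
        - apply Rmult_le_compat_l. left; apply Rinv_0_lt_compat; auto.
          apply EO_le. intros B s0 r Rc A rho HB _ _.
          assert (Ht : (B * 2^(S k') <= n)%nat) by (unfold n; rewrite pow4; nia).
          rewrite <- (Rlist_psum _ n _ Ht). apply wsum_le. apply Rlist_nonneg; intros; apply mu_bound.
          intros h. apply maxps_ge_psum; auto. }
      rewrite S_INR. destruct k' as [|k''].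
      * simpl INR. simpl Nat.pow in *. simpl INR in *. lra.
      * rewrite S_INR in *. pose proof (pos_INR k''). nra.
Qed.
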